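(* Let $f:\mathbb{F}_q^k\to\mathrm{Im}(f)$ and let $d_d<d_f$ be nonnegative integers. Let $L=\max_{\alpha\in\mathrm{Im}(f)}|f^{-1}(\alpha)|$. Then $$r_f(k:d_d,d_f)\ge\frac{(L-1)d_d+(q^k-L)d_f}{q^{k-1}(q-1)}-k.$$
   Context: $d(\cdot,\cdot)$ is Hamming distance; $f^{-1}(\alpha)=\{u:f(u)=\alpha\}$. For integers $0\le d_d\le d_f$, an $(f\!:d_d,d_f)$-FCC with redundancy $r$ is a systematic encoding $\mathfrak{C}_f(u)=(u,p_u)\in\mathbb{F}_q^{k+r}$ with $d(\mathfrak{C}_f(u_1),\mathfrak{C}_f(u_2))\ge d_d$ whenever $u_1\ne u_2$ and $\ge d_f$ whenever $f(u_1)\ne f(u_2)$; $r_f(k:d_d,d_f)$ is the minimum such $r$. *)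

(* Defs.v *)
From mathcomp Require Import all_boot all_order all_algebra.
Set Implicit Arguments. Unset Strict Implicit. Unset Printing Implicit Defensive.

Definition hamming (F : eqType) (n : nat) (x y : 'rV[F]_n) : nat :=
  #|[pred i : 'I_n | x ord0 i != y ord0 i]|.

Definition sys_enc (F : Type) (k r : nat) (p : 'rV[F]_k -> 'rV[F]_r)
  (u : 'rV[F]_k) : 'rV[F]_(k + r) := row_mx u (p u).

Definition is_FCC (F : finType) (Y : eqType) (k r : nat) (f : 'rV[F]_k -> Y)
  (dd df : nat) (p : 'rV[F]_k -> 'rV[F]_r) : Prop :=
  forall u1 u2 : 'rV[F]_k,
    (u1 != u2 -> dd <= hamming (sys_enc p u1) (sys_enc p u2)) /\
    (f u1 != f u2 -> df <= hamming (sys_enc p u1) (sys_enc p u2)).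

Definition max_fiber (F : finType) (Y : eqType) (k : nat) (f : 'rV[F]_k -> Y) : nat :=
  \max_(u : 'rV[F]_k) #|[pred v : 'rV[F]_k | f v == f u]|.

(* Main.v *)
Require Import Defs.
From mathcomp Require Import all_boot all_order all_algebra zify.
Import GRing.Theory Num.Theory.

Lemma amgm (x y : nat) : (2 * (x * y) <= x ^ 2 + y ^ 2)%N.
Proof. rewrite !expnS !expn0 !muln1.
case: (leqP x y) => h. have [d ->] : exists d, y = x + d by exists (y - x); lia. nia.
have [d ->] : exists d, x = y + d by exists (x - y); lia. nia. Qed.

Lemma cs (T : finType) (h : T -> nat) :
  ((\sum_a h a) ^ 2 <= #|T| * \sum_a h a ^ 2)%N.
Proof.
have E1 : ((\sum_a h a) ^ 2 = \sum_a \sum_b h a * h b)%N.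
  by rewrite expnS expn1 big_distrl /=; apply: eq_bigr => a _; rewrite big_distrr.
have E2 : (\sum_a \sum_b (h a ^ 2 + h b ^ 2) = 2 * (#|T| * \sum_a h a ^ 2))%N.
  under eq_bigr do rewrite big_split /= sum_nat_const.
  rewrite big_split /= sum_nat_const -big_distrr /=.
  rewrite (_ : #|xpredT| = #|T|) //; lia.
have E3 : (\sum_a \sum_b (2 * (h a * h b)) <= \sum_a \sum_b (h a ^ 2 + h b ^ 2))%N.
  by apply: leq_sum => a _; apply: leq_sum => b _; apply: amgm.
have E4 : (\sum_a \sum_b (2 * (h a * h b)) = 2 * \sum_a \sum_b h a * h b)%N.
  rewrite big_distrr /=; apply: eq_bigr => a _; by rewrite big_distrr.
lia.
Qed.

Lemma sumb (U : finType) (P : pred U) : (\sum_u (P u : nat) = #|P|)%N.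
Proof. rewrite -sum1_card [RHS]big_mkcond /=; apply: eq_bigr => u _; rewrite unfold_in; by case: (P u). Qed.

Lemma coord (U F : finType) (g : U -> F) :
  (#|F| * \sum_u1 \sum_u2 (g u1 != g u2 : nat) <= (#|F| - 1) * #|U| ^ 2)%N.
Proof.
set cnt := fun a => #|[pred u | g u == a]|.
have Hs : (\sum_a cnt a = #|U|)%N.
  rewrite -sum1_card (partition_big g xpredT) //=.
  apply: eq_bigr => a _; rewrite sum1_card; apply: eq_card => u /=; by rewrite !unfold_in.
have Heq : (\sum_u1 \sum_u2 (g u1 == g u2 : nat) = \sum_a cnt a ^ 2)%N.
  transitivity (\sum_u1 cnt (g u1))%N.
    apply: eq_bigr => u1 _; rewrite /cnt -sumb; apply: eq_bigr => u2 _ /=; by rewrite eq_sym.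
  rewrite (partition_big g xpredT) //=; apply: eq_bigr => a _.
  rewrite (eq_bigr (fun _ => cnt a)); last by move=> u; rewrite ?andTb => /eqP ->.
  rewrite sum_nat_const expnS expn1; congr (_ * _); apply: eq_card => u /=; by rewrite !unfold_in.
have Htot : (\sum_u1 \sum_u2 (g u1 == g u2 : nat) + \sum_u1 \sum_u2 (g u1 != g u2 : nat) = #|U| ^ 2)%N.
  rewrite -big_split /= expnS expn1.
  transitivity (\sum_(u1 : U) #|U|)%N; last by rewrite sum_nat_const.
  apply: eq_bigr => u1 _; rewrite -big_split /=.
  transitivity (\sum_(u2 : U) 1)%N; last by rewrite sum1_card.
  apply: eq_bigr => u2 _. by case: (g u1 == g u2).
have := @cs _ cnt; rewrite Hs -Heq.
move: Htot; set A := (#|U| ^ 2)%N; set B := (\sum_u1 _)%N; set C := (\sum_u1 _)%N; set q := #|F|.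
move=> Htot H. nia.
Qed.

Lemma sumc (U : finType) (P : pred U) c : (\sum_(i | P i) c = #|P| * c)%N.
Proof.
rewrite big_mkcond /= -sumb big_distrl /=; apply: eq_bigr => u _; by case: (P u); rewrite ?mul1n.
Qed.

Theorem theorem11 (F : finFieldType) (Y : eqType) (k : nat)
  (f : 'rV[F]_k -> Y) (dd df : nat) (Hd : (dd < df)%N)
  (r : nat) (p : 'rV[F]_k -> 'rV[F]_r) (Hp : is_FCC f dd df p) :
  let q := #|F| in
  let L := max_fiber f in
  ((((L - 1) * dd + (q ^ k - L) * df)%:R / ((q ^ (k - 1) * (q - 1))%:R) - k%:R
     : rat) <= r%:R)%R.
Proof.
cbv zeta. set q := #|F|. set L := max_fiber f.
set U := 'rV[F]_k.
have HN : #|{: U}| = (q ^ k)%N by rewrite card_mx mul1n.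
have Hq : (1 < q)%N by apply: card_finNzRing_gt1.
set N := #|{: U}| in HN.
set X := ((L - 1) * dd + (q ^ k - L) * df)%N.
set T := (\sum_(u1 : U) \sum_(u2 : U) hamming (sys_enc p u1) (sys_enc p u2))%N.
have Hup : (q * T <= (k + r) * ((q - 1) * N ^ 2))%N.
  have -> : T = \sum_(i < k + r) \sum_(u1 : U) \sum_(u2 : U)
       ((sys_enc p u1) ord0 i != (sys_enc p u2) ord0 i : nat).
    rewrite [RHS]exchange_big /= /T; apply: eq_bigr => u1 _.
    rewrite [RHS]exchange_big /=; apply: eq_bigr => u2 _.
    by rewrite /hamming -sumb.
  rewrite big_distrr /=.
  apply: (@leq_trans (\sum_(i < k + r) ((q - 1) * N ^ 2))%N).
    apply: leq_sum => i _; exact: (@coord _ _ (fun u : U => (sys_enc p u) ord0 i)).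
  by rewrite sum_nat_const card_ord.
have HL1 : (L <= N)%N.
  apply/bigmax_leqP => u _; exact: max_card.
have Hlow : (N * X <= T)%N.
  rewrite -[X in (X * _ <= _)%N]sum1_card big_distrl /=.
  apply: leq_sum => u1 _; rewrite mul1n.
  set P := [pred v : U | f v == f u1].
  have Hm1 : (0 < #|P|)%N by apply/card_gt0P; exists u1; rewrite inE.
  have HmL : (#|P| <= L)%N by apply: (leq_bigmax u1).
  rewrite (bigID P) /=.
  have A1 : (#|P| * dd - dd <= \sum_(i | P i) hamming (sys_enc p u1) (sys_enc p i))%N.
    rewrite (bigD1 u1) ?inE //=.
    have E : (\sum_(i | P i) dd = dd + \sum_(i | P i && (i != u1)) dd)%N.
      by rewrite (bigD1 u1) ?inE.
    rewrite sumc in E.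
    have : (\sum_(i | P i && (i != u1)) dd <= \sum_(i | P i && (i != u1)) hamming (sys_enc p u1) (sys_enc p i))%N.
      apply: leq_sum => i /andP[_ Hi]; have [+ _] := Hp u1 i; apply; by rewrite eq_sym.
    rewrite /P /= in E *; move=> H. rewrite E addKn; exact: leq_trans H (leq_addl _ _).
  have A2 : ((N - #|P|) * df <= \sum_(i | ~~ P i) hamming (sys_enc p u1) (sys_enc p i))%N.
    have E : (\sum_(i | ~~ P i) df = (N - #|P|) * df)%N.
      rewrite sumc; congr (_ * _); rewrite /N -(cardC P) addKn; apply: eq_card => i; by rewrite !inE.
    rewrite -E; apply: leq_sum => i Hi; have [_ +] := Hp u1 i; apply.
    by move: Hi; rewrite inE eq_sym.
  rewrite /X -HN.
  apply: leq_trans (leq_add A1 A2); nia.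
have HL0 : (1 <= L)%N.
  have u0 : U := 0%R.
  apply: leq_trans (leq_bigmax u0); apply/card_gt0P; exists u0; by rewrite inE.
have HqX : (q * X <= (k + r) * (q - 1) * N)%N.
  have HN0 : (0 < N)%N by rewrite HN expn_gt0; lia.
  have H1 : (N * (q * X) <= N * ((k + r) * (q - 1) * N))%N.
    have := leq_mul (leqnn q) Hlow. move: Hup. clearbody X T N. nia.
  by rewrite leq_pmul2l in H1.
have HXD : (X <= (k + r) * (q ^ (k - 1) * (q - 1)))%N.
  rewrite /X in HqX *. clearbody T N.
  case Ek: k => [|k']; rewrite Ek in HN HqX.
    rewrite expn0 in HN *. have -> : L = 1%N by lia. by rewrite subnn.
  rewrite HN expnS in HqX. rewrite (_ : (k'.+1 - 1 = k')%N); last lia.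
  rewrite -(@leq_pmul2l q); last lia.
  rewrite expnS. apply: leq_trans HqX _. nia.
have HD : (0 < q ^ (k - 1) * (q - 1))%N by rewrite muln_gt0 expn_gt0; lia.
rewrite lerBlDr ler_pdivrMr ?ltr0n // -natrD -natrM ler_nat addnC.
exact: HXD.
Qed.
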